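(* Let $(V,\nu,\tau,\tau^* )$ be a PN space in which $\nu(V)\subseteq D^+$ and $\tau(D^+\times D^+)\subseteq D^+$. Then every $D$-compact subset $A$ of $V$ is $D$-bounded and closed (in the strong topology).
   Context: $\Delta^{+}$ is the set of functions $F:[-\infty,+\infty]\to[0,1]$ that are left-continuous on $\mathbb{R}$, nondecreasing, with $F(0)=0$ and $F(+\infty)=1$, ordered pointwise; $D^{+}=\{F\in\Delta^{+}: l^{-}F(+\infty)=1\}$, where $l^{-}f(x)=\lim_{t\to x^{-}}f(t)$. $\varepsilon_0$ is the d.f. equal to $0$ for $x\le0$ and $1$ for $x>0$. A triangle function is a map $\tau:\Delta^+\times\Delta^+\to\Delta^+$ that is associative, commutative, nondecreasing in each argument, with unit $\varepsilon_0$. A PN space is a quadruple $(V,\nu,\tau,\tau^* )$ with $V$ a real vector space, $\tau\le\tau^*$ continuous triangle functions, and $\nu:V\to\Delta^+$ such that for all $p,q\in V$: (N1) $\nu_p=\varepsilon_0$ iff $p=\theta$; (N2) $\nu_{-p}=\nu_p$; (N3) $\nu_{p+q}\ge\tau(\nu_p,\nu_q)$; (N4) $\nu_p\le\tau^*(\nu_{\lambda p},\nu_{(1-\lambda)p})$ for all $\lambda\in[0,1]$. The strong topology on $V$ is generated by the neighborhoods $N_p(\lambda)=\{q\in V:\nu_{p-q}(\lambda)>1-\lambda\}$, $\lambda>0$; $(p_m)$ strongly converges to $p$ if for every $\lambda>0$ eventually $p_m\in N_p(\lambda)$. For nonempty $A\subseteq V$, $R_A(x)=l^{-}\inf\{\nu_q(x):q\in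 A\}$ for $x\in[0,+\infty)$ and $R_A(+\infty)=1$; $A$ is $D$-bounded if $R_A\in D^+$. A subset $A\subseteq V$ is $D$-compact if every sequence in $A$ has a subsequence strongly converging to a vector of $A$. *)

(* Defs.v *)
From Stdlib Require Import Reals.
From Coquelicot Require Import Coquelicot.
Open Scope R_scope.

(* A distance distribution function F : [-oo,+oo] -> [0,1] is represented by its
   restriction to R; the values F(-oo) = 0 and F(+oo) = 1 are implicit
   (F(+oo) = 1 is part of the definition of Delta^+, and F(-oo) = 0 is forced by
   monotonicity and F(0) = 0). *)
Definition dfun := R -> R.

Definition left_continuous (F : dfun) : Prop :=
  forall x : R, filterlim F (at_left x) (locally (F x)).

Definition nondecreasing (F : dfun) : Prop :=
  forall x y : R, x <= y -> F x <= F y.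

Definition in_Delta (F : dfun) : Prop :=
  (forall x, 0 <= F x <= 1) /\ left_continuous F /\ nondecreasing F /\ F 0 = 0.

Definition in_Dplus (F : dfun) : Prop :=
  in_Delta F /\ is_lim F p_infty 1.

Definition dle (F G : dfun) : Prop := forall x, F x <= G x.
Definition deq (F G : dfun) : Prop := forall x, F x = G x.

Definition eps0 : dfun := fun x => if Rle_dec x 0 then 0 else 1.

Definition triangle_function (tau : dfun -> dfun -> dfun) : Prop :=
  (forall F G, in_Delta F -> in_Delta G -> in_Delta (tau F G)) /\
  (forall F G H, in_Delta F -> in_Delta G -> in_Delta H ->
     deq (tau (tau F G) H) (tau F (tau G H))) /\
  (forall F G, in_Delta F -> in_Delta G -> deq (tau F G) (tau G F)) /\
  (forall F F' G, in_Delta F -> in_Delta F' -> in_Delta G -> dle F F' ->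
     dle (tau F G) (tau F' G)) /\
  (forall F G G', in_Delta F -> in_Delta G -> in_Delta G' -> dle G G' ->
     dle (tau F G) (tau F G')) /\
  (forall F, in_Delta F -> deq (tau F eps0) F).

Definition weak_conv (Fn : nat -> dfun) (F : dfun) : Prop :=
  forall x : R, continuous F x -> is_lim_seq (fun n => Fn n x) (F x).

(* continuity of a triangle function w.r.t. the (metrizable) topology of weak
   convergence on Delta^+, stated sequentially *)
Definition tf_continuous (tau : dfun -> dfun -> dfun) : Prop :=
  forall (Fn Gn : nat -> dfun) (F G : dfun),
    (forall n, in_Delta (Fn n)) -> (forall n, in_Delta (Gn n)) ->
    in_Delta F -> in_Delta G ->
    weak_conv Fn F -> weak_conv Gn G ->
    weak_conv (fun n => tau (Fn n) (Gn n)) (tau F G).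

Definition PN_space {V : ModuleSpace R_Ring} (nu : V -> dfun)
  (tau taus : dfun -> dfun -> dfun) : Prop :=
  triangle_function tau /\ tf_continuous tau /\
  triangle_function taus /\ tf_continuous taus /\
  (forall F G, in_Delta F -> in_Delta G -> dle (tau F G) (taus F G)) /\
  (forall p : V, in_Delta (nu p)) /\
  (forall p : V, deq (nu p) eps0 <-> p = zero) /\
  (forall p : V, deq (nu (opp p)) (nu p)) /\
  (forall p q : V, dle (tau (nu p) (nu q)) (nu (plus p q))) /\
  (forall (p : V) (l : R), 0 <= l <= 1 ->
              dle (nu p) (taus (nu (scal l p)) (nu (scal (1 - l) p)))).

Definition N_strong {V : ModuleSpace R_Ring} (nu : V -> dfun) (p : V) (l : R)
  (q : V) : Prop := nu (minus p q) l > 1 - l.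

Definition strong_open {V : ModuleSpace R_Ring} (nu : V -> dfun) (U : V -> Prop)
  : Prop :=
  forall p, U p -> exists l, l > 0 /\ forall q, N_strong nu p l q -> U q.

Definition strong_closed {V : ModuleSpace R_Ring} (nu : V -> dfun)
  (A : V -> Prop) : Prop :=
  strong_open nu (fun p => ~ A p).

Definition strong_conv {V : ModuleSpace R_Ring} (nu : V -> dfun)
  (pm : nat -> V) (p : V) : Prop :=
  forall l, l > 0 -> exists N : nat, forall m, (N <= m)%nat -> N_strong nu p l (pm m).

Definition D_compact {V : ModuleSpace R_Ring} (nu : V -> dfun) (A : V -> Prop)
  : Prop :=
  forall pm : nat -> V, (forall m, A (pm m)) ->
    exists (phi : nat -> nat) (p : V),
      (forall m, (phi m < phi (S m))%nat) /\ A p /\ strong_conv nu (fun m => pm (phi m)) p.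

Definition inf_nu {V : ModuleSpace R_Ring} (nu : V -> dfun) (A : V -> Prop)
  (t : R) : R :=
  real (Glb_Rbar (fun y => exists q, A q /\ y = nu q t)).

Definition is_R_A {V : ModuleSpace R_Ring} (nu : V -> dfun) (A : V -> Prop)
  (F : dfun) : Prop :=
  forall x, 0 <= x -> filterlim (inf_nu nu A) (at_left x) (locally (F x)).

Definition D_bounded {V : ModuleSpace R_Ring} (nu : V -> dfun) (A : V -> Prop)
  : Prop :=
  exists F, is_R_A nu A F /\ in_Dplus F.

(* Main.v *)
Require Import Defs.
From Stdlib Require Import Reals Lra Lia ClassicalEpsilon Classical FunctionalExtensionality.
From Coquelicot Require Import Coquelicot.
Open Scope R_scope.

Lemma delta_le0 F x : in_Delta F -> x <= 0 -> F x = 0.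
Proof.
  intros [Hb [_ [Hm H0]]] Hx. specialize (Hm _ _ Hx). specialize (Hb x). lra.
Qed.

Lemma eps0_Delta : in_Delta eps0.
Proof.
  unfold in_Delta, eps0. refine (conj _ (conj _ (conj _ _))).
  - intro x; destruct (Rle_dec x 0); lra.
  - intro x. apply filterlim_locally. intro eps.
    destruct (Rle_dec x 0) as [Hx|Hx].
    + exists (mkposreal 1 Rlt_0_1). intros y _ Hy.
      destruct (Rle_dec y 0); [apply ball_center| lra].
    + assert (Hp : 0 < x) by lra. exists (mkposreal x Hp). intros y Hb Hy.
      change (Rabs (y - x) < x) in Hb. apply Rabs_def2 in Hb.
      destruct (Rle_dec y 0); [lra| apply ball_center].
  - intros x y Hxy. destruct (Rle_dec x 0); destruct (Rle_dec y 0); lra.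
  - destruct (Rle_dec 0 0); lra.
Qed.

Lemma eps0_cont x : 0 < x -> continuous eps0 x.
Proof.
  intro Hx. unfold continuous. apply filterlim_locally. intro eps.
  exists (mkposreal x Hx). intros y Hb.
  change (Rabs (y - x) < x) in Hb. apply Rabs_def2 in Hb.
  unfold eps0. destruct (Rle_dec y 0); destruct (Rle_dec x 0); try lra. apply ball_center.
Qed.

Lemma conv_eps0 (V : ModuleSpace R_Ring) (nu : V -> dfun)
  (Hd : forall p, in_Delta (nu p)) r p :
  strong_conv nu r p -> forall x, is_lim_seq (fun m => nu (minus p (r m)) x) (eps0 x).
Proof.
  intros Hc x. unfold eps0. destruct (Rle_dec x 0) as [Hx|Hx].
  - apply is_lim_seq_ext with (fun _ => 0). intro n. symmetry; apply delta_le0; auto.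
    apply is_lim_seq_const.
  - apply is_lim_seq_spec. intro eps.
    set (l := Rmin x eps / 2).
    assert (Hl : l > 0). { unfold l. apply Rmin_case; destruct eps; simpl; lra. }
    destruct (Hc l Hl) as [N HN]. exists N. intros n Hn. specialize (HN n Hn).
    unfold N_strong in HN.
    destruct (Hd (minus p (r n))) as [Hb [_ [Hm _]]].
    assert (l <= x) by (unfold l; generalize (Rmin_l x eps); lra).
    assert (l < eps) by (unfold l; generalize (Rmin_r x eps); destruct eps; simpl in *; lra).
    specialize (Hm _ _ H). specialize (Hb x).
    apply Rabs_def1; lra.
Qed.

Lemma conv_eps0' (V : ModuleSpace R_Ring) (nu : V -> dfun)
  (Hd : forall p, in_Delta (nu p))
  (N2 : forall p : V, deq (nu (opp p)) (nu p)) r p :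
  strong_conv nu r p -> forall x, is_lim_seq (fun m => nu (minus (r m) p) x) (eps0 x).
Proof.
  intros Hc x. apply is_lim_seq_ext with (fun m => nu (minus p (r m)) x).
  - intro n. rewrite <- opp_minus. apply N2.
  - apply conv_eps0; auto.
Qed.

Lemma minus_trans (G : AbelianGroup) (a b c : G) : plus (minus a b) (minus b c) = minus a c.
Proof.
  unfold minus. rewrite <- plus_assoc, (plus_assoc (opp b)), plus_opp_l, plus_zero_l. reflexivity.
Qed.

Lemma minus_eq0 (G : AbelianGroup) (a b : G) : minus a b = zero -> a = b.
Proof.
  intro H.
  transitivity (plus (minus a b) b).
  - unfold minus. rewrite <- plus_assoc, plus_opp_l, plus_zero_r. reflexivity.
  - rewrite H. apply plus_zero_l.
Qed.

Lemma phi_ge (phi : nat -> nat) : (forall m, (phi m < phi (S m))%nat) -> forall m, (m <= phi m)%nat.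
Proof.
  intros H m. induction m. lia. specialize (H m). lia.
Qed.

Lemma strong_conv_sub (V : ModuleSpace R_Ring) (nu : V -> dfun) r p phi :
  (forall m, (phi m < phi (S m))%nat) ->
  strong_conv nu r p -> strong_conv nu (fun m => r (phi m)) p.
Proof.
  intros Hphi Hc l Hl. destruct (Hc l Hl) as [N HN]. exists N. intros m Hm.
  apply HN. generalize (phi_ge phi Hphi m). lia.
Qed.

Lemma uniq_lim (V : ModuleSpace R_Ring) (nu : V -> dfun) tau taus :
  PN_space nu tau taus -> forall r p p',
  strong_conv nu r p -> strong_conv nu r p' -> p = p'.
Proof.
  intros HPN r p p' Hc Hc'.
  destruct HPN as [Ht [Htc [_ [_ [_ [Hd [N1 [N2 [N3 _]]]]]]]]].
  destruct Ht as [Hdt [Hass [Hcom [Hm1 [Hm2 Hunit]]]]].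
  assert (Hw := Htc (fun m => nu (minus p (r m))) (fun m => nu (minus (r m) p')) eps0 eps0
    (fun m => Hd _) (fun m => Hd _) eps0_Delta eps0_Delta
    (fun x _ => conv_eps0 V nu Hd r p Hc x) (fun x _ => conv_eps0' V nu Hd N2 r p' Hc' x)).
  assert (Heq : tau eps0 eps0 = eps0).
  { apply functional_extensionality. intro x. apply Hunit, eps0_Delta. }
  rewrite Heq in Hw.
  apply minus_eq0. apply N1. intro x.
  destruct (Rle_dec x 0) as [Hx|Hx].
  - rewrite delta_le0; auto. unfold eps0. destruct (Rle_dec x 0); lra.
  - assert (Hl := Hw x (eps0_cont x ltac:(lra))).
    assert (E1 : eps0 x = 1) by (unfold eps0; destruct (Rle_dec x 0); lra).
    rewrite E1 in Hl |- *.
    assert (Hle := is_lim_seq_le _ (fun _ => nu (minus p p') x) _ _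
      (fun n => ltac:(rewrite <- (minus_trans _ p (r n) p'); apply N3)) Hl (is_lim_seq_const _)).
    simpl in Hle. destruct (Hd (minus p p')) as [Hb _]. specialize (Hb x). lra.
Qed.

Lemma closed_part (V : ModuleSpace R_Ring) (nu : V -> dfun) tau taus :
  PN_space nu tau taus -> forall A : V -> Prop, D_compact nu A -> strong_closed nu A.
Proof.
  intros HPN A Hc p Hp. apply NNPP; intro Hn.
  assert (Hd : forall p, in_Delta (nu p)) by apply HPN.
  assert (H : forall n:nat, exists q, A q /\ N_strong nu p (/(INR n + 1)) q).
  { intro n. apply NNPP; intro H. apply Hn. exists (/(INR n+1)). split.
    - apply Rinv_0_lt_compat. generalize (pos_INR n). lra.
    - intros q Hq HA. apply H; eauto. }
  set (qs := fun n => proj1_sig (constructive_indefinite_description _ (H n))).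
  assert (Hqs : forall n, A (qs n) /\ N_strong nu p (/(INR n + 1)) (qs n)).
  { intro n. exact (proj2_sig (constructive_indefinite_description _ (H n))). }
  assert (Hconv : strong_conv nu qs p).
  { intros l Hl. destruct (archimed_cor1 l Hl) as [N [HN HN0]]. exists N. intros m Hm.
    destruct (Hqs m) as [_ Hq]. unfold N_strong in *.
    assert (HINR : INR N <= INR m) by (apply le_INR; lia).
    assert (HN' : 0 < INR N) by (apply lt_0_INR; lia).
    assert (Hi : / (INR m + 1) <= / INR N) by (apply Rinv_le_contravar; lra).
    destruct (Hd (minus p (qs m))) as [_ [_ [Hm' _]]].
    specialize (Hm' (/(INR m + 1)) l ltac:(lra)). lra. }
  destruct (Hc qs (fun n => proj1 (Hqs n))) as [phi [p' [Hphi [Hp' Hc']]]].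
  assert (p = p') by (eapply uniq_lim; [exact HPN| apply strong_conv_sub; eauto | exact Hc']).
  subst. contradiction.
Qed.


Lemma g_fin (V : ModuleSpace R_Ring) (nu : V -> dfun) (Hd : forall p, in_Delta (nu p))
  (A : V -> Prop) a (Ha : A a) t :
  Glb_Rbar (fun y => exists q, A q /\ y = nu q t) = Finite (inf_nu nu A t).
Proof.
  unfold inf_nu.
  destruct (Glb_Rbar_correct (fun y => exists q, A q /\ y = nu q t)) as [Hlb Hgr].
  revert Hlb Hgr. case (Glb_Rbar (fun y => exists q, A q /\ y = nu q t)).
  - intros; reflexivity.
  - intros Hlb _. exfalso. apply (Hlb (nu a t)). eauto.
  - intros _ Hgr. exfalso. apply (Hgr (Finite 0)). intros y [q [_ ->]].
    simpl. apply (Hd q).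
Qed.

Lemma g_le (V : ModuleSpace R_Ring) (nu : V -> dfun) (Hd : forall p, in_Delta (nu p))
  (A : V -> Prop) a (Ha : A a) t q : A q -> inf_nu nu A t <= nu q t.
Proof.
  intro Hq. destruct (Glb_Rbar_correct (fun y => exists q, A q /\ y = nu q t)) as [Hlb _].
  rewrite (g_fin V nu Hd A a Ha t) in Hlb. apply (Hlb (nu q t)). eauto.
Qed.

Lemma g_ge (V : ModuleSpace R_Ring) (nu : V -> dfun) (Hd : forall p, in_Delta (nu p))
  (A : V -> Prop) a (Ha : A a) t b : (forall q, A q -> b <= nu q t) -> b <= inf_nu nu A t.
Proof.
  intro Hb. destruct (Glb_Rbar_correct (fun y => exists q, A q /\ y = nu q t)) as [_ Hgr].
  rewrite (g_fin V nu Hd A a Ha t) in Hgr. apply (Hgr (Finite b)).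
  intros y [q [Hq ->]]. simpl. auto.
Qed.

Lemma g_bounds (V : ModuleSpace R_Ring) (nu : V -> dfun) (Hd : forall p, in_Delta (nu p))
  (A : V -> Prop) a (Ha : A a) t : 0 <= inf_nu nu A t <= 1.
Proof.
  split.
  - apply (g_ge V nu Hd A a Ha). intros q _. apply Hd.
  - eapply Rle_trans. apply (g_le V nu Hd A a Ha t a Ha). apply Hd.
Qed.

Lemma g_mono (V : ModuleSpace R_Ring) (nu : V -> dfun) (Hd : forall p, in_Delta (nu p))
  (A : V -> Prop) a (Ha : A a) s t : s <= t -> inf_nu nu A s <= inf_nu nu A t.
Proof.
  intro Hst. apply (g_ge V nu Hd A a Ha). intros q Hq.
  eapply Rle_trans. apply (g_le V nu Hd A a Ha s q Hq). apply Hd; auto.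
Qed.

Definition Fsup (g : R -> R) (x : R) : R :=
  real (Lub_Rbar (fun y => exists t, t < x /\ y = g t)).

Lemma F_fin (g : R -> R) (Hg : forall t, 0 <= g t <= 1) x :
  Lub_Rbar (fun y => exists t, t < x /\ y = g t) = Finite (Fsup g x).
Proof.
  unfold Fsup.
  destruct (Lub_Rbar_correct (fun y => exists t, t < x /\ y = g t)) as [Hub Hgr].
  revert Hub Hgr. case (Lub_Rbar (fun y => exists t, t < x /\ y = g t)).
  - intros; reflexivity.
  - intros _ Hgr. exfalso. apply (Hgr (Finite 1)). intros y [t [_ ->]].
    simpl. apply Hg.
  - intros Hub _. exfalso. apply (Hub (g (x - 1))). exists (x - 1). split; auto. lra.
Qed.

Lemma F_ge (g : R -> R) (Hg : forall t, 0 <= g t <= 1) x t : t < x -> g t <= Fsup g x.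
Proof.
  intro Ht. destruct (Lub_Rbar_correct (fun y => exists t, t < x /\ y = g t)) as [Hub _].
  rewrite (F_fin g Hg x) in Hub. apply (Hub (g t)). eauto.
Qed.

Lemma F_le (g : R -> R) (Hg : forall t, 0 <= g t <= 1) x b :
  (forall t, t < x -> g t <= b) -> Fsup g x <= b.
Proof.
  intro Hb. destruct (Lub_Rbar_correct (fun y => exists t, t < x /\ y = g t)) as [_ Hgr].
  rewrite (F_fin g Hg x) in Hgr. apply (Hgr (Finite b)).
  intros y [t [Ht ->]]. simpl. auto.
Qed.

Lemma left_lim (h : R -> R) (L x : R) :
  (forall t, t < x -> h t <= L) -> (forall eps, 0 < eps -> exists t0, t0 < x /\ L - eps < h t0) ->
  (forall s t, s <= t -> h s <= h t) -> filterlim h (at_left x) (locally L).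
Proof.
  intros H1 H2 H3. apply filterlim_locally. intro eps.
  destruct (H2 eps (cond_pos eps)) as [t0 [Ht0 Hh]].
  assert (Hp : 0 < x - t0) by lra. exists (mkposreal _ Hp). intros y Hb Hy.
  change (Rabs (y - x) < x - t0) in Hb. apply Rabs_def2 in Hb.
  change (Rabs (h y - L) < eps). specialize (H1 y Hy). specialize (H3 t0 y ltac:(lra)).
  apply Rabs_def1; lra.
Qed.

Lemma F_props (g : R -> R) (Hg : forall t, 0 <= g t <= 1)
  (Hm : forall s t, s <= t -> g s <= g t) (H0 : forall t, t <= 0 -> g t = 0) :
  in_Delta (Fsup g) /\ (forall x, filterlim g (at_left x) (locally (Fsup g x))).
Proof.
  assert (Fmono : forall s t, s <= t -> Fsup g s <= Fsup g t).
  { intros s t Hst. apply F_le; auto. intros u Hu. apply F_ge; auto. lra. }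
  assert (Happ : forall x eps, 0 < eps -> exists t0, t0 < x /\ Fsup g x - eps < g t0).
  { intros x eps He. apply NNPP. intro Hn.
    assert (Fsup g x <= Fsup g x - eps); [|lra].
    apply F_le; auto. intros t Ht. apply Rnot_lt_le. intro H. apply Hn. eauto. }
  split; [refine (conj _ (conj _ (conj _ _)))|].
  - intro x. split.
    + eapply Rle_trans; [apply (Hg (x-1))|]. apply F_ge; auto. lra.
    + apply F_le; auto. intros; apply Hg.
  - intro x. apply left_lim; auto.
    + intros t Ht; apply Fmono; lra.
    + intros eps He. destruct (Happ x eps He) as [t0 [Ht0 Hh]].
      exists ((t0 + x)/2). split. lra. eapply Rlt_le_trans. apply Hh. apply F_ge; auto. lra.
  - exact Fmono.
  - apply Rle_antisym.
    + apply F_le; auto. intros t Ht. rewrite H0; lra.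
    + eapply Rle_trans; [apply (Hg (-1))|]. apply F_ge; auto. lra.
  - intro x. apply left_lim; auto.
    intros t Ht. apply F_ge; auto.
Qed.

Definition clamp (y : R) : R := Rmin 1 (Rmax 0 y).

Lemma clamp_lip y z : Rabs (clamp y - clamp z) <= Rabs (y - z).
Proof.
  unfold clamp, Rmin, Rmax. repeat destruct Rle_dec; unfold Rabs; repeat destruct Rcase_abs; lra.
Qed.

Lemma clamp_mono y z : y <= z -> clamp y <= clamp z.
Proof. unfold clamp, Rmin, Rmax. intros. repeat destruct Rle_dec; lra. Qed.

Lemma clamp_bounds y : 0 <= clamp y <= 1.
Proof. unfold clamp, Rmin, Rmax. repeat destruct Rle_dec; lra. Qed.

Lemma Gfun_lip c x0 (Hc : 0 <= c <= 1) y z :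
  Rabs (c * clamp (y - x0) - c * clamp (z - x0)) <= Rabs (y - z).
Proof.
  rewrite <- Rmult_minus_distr_l, Rabs_mult, (Rabs_right c) by lra.
  eapply Rle_trans. apply Rmult_le_compat_l. lra. apply clamp_lip.
  replace (y - x0 - (z - x0)) with (y - z) by ring.
  generalize (Rabs_pos (y - z)). nra.
Qed.

Lemma Gfun_cont c x0 (Hc : 0 <= c <= 1) x :
  continuous (fun y => c * clamp (y - x0)) x.
Proof.
  unfold continuous. apply filterlim_locally. intro eps. exists eps. intros y Hb.
  change (Rabs (y - x) < eps) in Hb. change (Rabs (c * clamp (y - x0) - c * clamp (x - x0)) < eps).
  eapply Rle_lt_trans. apply Gfun_lip; auto. exact Hb.
Qed.

Lemma Gfun_Delta c x0 (Hc : 0 <= c <= 1) (Hx0 : 0 <= x0) :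
  in_Delta (fun y => c * clamp (y - x0)).
Proof.
  refine (conj _ (conj _ (conj _ _))).
  - intro x. generalize (clamp_bounds (x - x0)). nra.
  - intro x. apply filterlim_locally. intro eps. exists eps. intros y Hb _.
    change (Rabs (y - x) < eps) in Hb. change (Rabs (c * clamp (y - x0) - c * clamp (x - x0)) < eps).
    eapply Rle_lt_trans. apply Gfun_lip; auto. exact Hb.
  - intros x y Hxy. apply Rmult_le_compat_l. lra. apply clamp_mono. lra.
  - simpl. replace (clamp (0 - x0)) with 0. ring.
    unfold clamp, Rmin, Rmax. repeat destruct Rle_dec; lra.
Qed.

Lemma plus_minus_l (G : AbelianGroup) (a b : G) : plus (minus a b) b = a.
Proof. unfold minus. rewrite <- plus_assoc, plus_opp_l, plus_zero_r. reflexivity. Qed.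

Lemma key (V : ModuleSpace R_Ring) (nu : V -> dfun) tau taus :
  PN_space nu tau taus -> (forall p : V, in_Dplus (nu p)) ->
  forall A : V -> Prop, D_compact nu A ->
  forall e, 0 < e -> exists x0, forall q, A q -> 1 - e <= nu q x0.
Proof.
  intros HPN HD A Hc e He.
  destruct HPN as [Ht [Htc [_ [_ [_ [Hd [N1 [N2 [N3 _]]]]]]]]].
  destruct Ht as [Hdt [Hass [Hcom [Hm1 [Hm2 Hunit]]]]].
  apply NNPP; intro Hn.
  assert (H : forall n:nat, exists q, A q /\ nu q (INR n) < 1 - e).
  { intro n. apply NNPP; intro H. apply Hn. exists (INR n). intros q Hq.
    apply Rnot_lt_le. intro H'. apply H; eauto. }
  set (qs := fun n => proj1_sig (constructive_indefinite_description _ (H n))).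
  assert (Hqs : forall n, A (qs n) /\ nu (qs n) (INR n) < 1 - e).
  { intro n. exact (proj2_sig (constructive_indefinite_description _ (H n))). }
  destruct (Hc qs (fun n => proj1 (Hqs n))) as [phi [p [Hphi [Hp Hc']]]].
  destruct (HD p) as [_ Hlim].
  assert (He2 : 0 < e / 2) by lra.
  destruct (proj1 (filterlim_locally _ _) Hlim (mkposreal _ He2)) as [M HM].
  set (x0 := Rmax 0 M + 1).
  set (c := Rmax 0 (1 - e/2)).
  assert (Hcb : 0 <= c <= 1) by (unfold c, Rmax; destruct Rle_dec; lra).
  assert (Hx0 : 0 <= x0) by (unfold x0; generalize (Rmax_l 0 M); lra).
  set (G := fun y => c * clamp (y - x0)).
  assert (HGd : in_Delta G) by (apply Gfun_Delta; auto).
  assert (HGle : dle G (nu p)).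
  { intro x. unfold G. destruct (Rle_dec x x0).
    - replace (clamp (x - x0)) with 0 by (unfold clamp, Rmin, Rmax; repeat destruct Rle_dec; lra).
      rewrite Rmult_0_r. apply (Hd p).
    - assert (HMx : M < x) by (unfold x0 in *; generalize (Rmax_r 0 M); lra).
      specialize (HM x HMx). change (Rabs (nu p x - 1) < e/2) in HM. apply Rabs_def2 in HM.
      generalize (clamp_bounds (x - x0)). intro.
      assert (c <= nu p x) by (unfold c, Rmax; destruct Rle_dec; destruct (Hd p) as [Hb _]; specialize (Hb x); lra).
      assert (0 <= nu p x) by apply (Hd p). nra. }
  assert (Hw := Htc (fun m => nu (minus (qs (phi m)) p)) (fun _ => G) eps0 G
    (fun m => Hd _) (fun m => HGd) eps0_Delta HGd
    (fun x _ => conv_eps0' V nu Hd N2 (fun m => qs (phi m)) p Hc' x)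
    (fun x _ => is_lim_seq_const _)).
  assert (Heq : tau eps0 G = G).
  { apply functional_extensionality. intro x. rewrite (Hcom _ _ eps0_Delta HGd). apply Hunit, HGd. }
  rewrite Heq in Hw.
  set (x1 := x0 + 1).
  assert (Hl := Hw x1 (Gfun_cont c x0 Hcb x1)).
  assert (HG1 : G x1 = c).
  { unfold G, x1. replace (clamp (x0 + 1 - x0)) with 1. ring.
    unfold clamp, Rmin, Rmax. repeat destruct Rle_dec; lra. }
  rewrite HG1 in Hl.
  assert (Hc1 : 1 - e / 2 <= c) by apply Rmax_r.
  apply is_lim_seq_spec in Hl.
  assert (He3 : 0 < c - (1 - e)) by lra.
  destruct (Hl (mkposreal _ He3)) as [N HN].
  destruct (INR_archimed 1 x1 Rlt_0_1) as [m0 Hm0]. rewrite Rmult_1_r in Hm0.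
  set (n := Nat.max N m0).
  specialize (HN n ltac:(unfold n; lia)). simpl in HN. apply Rabs_def2 in HN.
  set (q := qs (phi n)).
  assert (T1 : 1 - e < tau (nu (minus q p)) G x1).
  { unfold q. destruct HN as [_ HN]. revert HN. generalize (tau (nu (minus (qs (phi n)) p)) G x1). intros. lra. }
  assert (T2 : tau (nu (minus q p)) G x1 <= tau (nu (minus q p)) (nu p) x1) by (apply Hm2; auto).
  assert (T3 : tau (nu (minus q p)) (nu p) x1 <= nu q x1).
  { generalize (N3 (minus q p) p x1). assert (E : nu (plus (minus q p) p) x1 = nu q x1) by (f_equal; apply plus_minus_l). intro HH. exact (Rle_trans _ _ _ HH (Req_le _ _ E)). }
  assert (Hq1 : 1 - e < nu q x1) by lra.
  destruct (Hqs (phi n)) as [_ Hq2]. fold q in Hq2.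
  assert (Hn1 : x1 <= INR (phi n)).
  { assert (m0 <= phi n)%nat by (generalize (phi_ge phi Hphi n); unfold n; lia).
    apply le_INR in H0. lra. }
  destruct (Hd q) as [_ [_ [Hmq _]]]. specialize (Hmq _ _ Hn1). lra.
Qed.

Theorem lemma24 (V : ModuleSpace R_Ring) (nu : V -> dfun)
  (tau taus : dfun -> dfun -> dfun) :
  PN_space nu tau taus ->
  (forall p : V, in_Dplus (nu p)) ->
  (forall F G, in_Dplus F -> in_Dplus G -> in_Dplus (tau F G)) ->
  forall A : V -> Prop, (exists a, A a) ->
  D_compact nu A -> D_bounded nu A /\ strong_closed nu A.
Proof.
  intros HPN HD _ A [a Ha] Hc. split; [|eapply closed_part; eauto].
  assert (Hd : forall p, in_Delta (nu p)) by apply HPN.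
  set (g := inf_nu nu A).
  assert (Hg : forall t, 0 <= g t <= 1) by (intro; apply (g_bounds V nu Hd A a Ha)).
  assert (Hgm : forall s t, s <= t -> g s <= g t) by (intros; apply (g_mono V nu Hd A a Ha); auto).
  assert (Hg0 : forall t, t <= 0 -> g t = 0).
  { intros t Ht. apply Rle_antisym; [|apply Hg].
    rewrite <- (delta_le0 (nu a) t (Hd a) Ht). apply (g_le V nu Hd A a Ha t a Ha). }
  destruct (F_props g Hg Hgm Hg0) as [HFd HFl].
  exists (Fsup g). split.
  - intros x _. apply HFl.
  - split; auto. unfold is_lim.
    change (filterlim (Fsup g) (Rbar_locally' p_infty) (locally 1)).
    apply filterlim_locally. intro eps.
    assert (He2 : 0 < eps / 2) by (destruct eps; simpl; lra).
    destruct (key V nu tau taus HPN HD A Hc _ He2) as [x0 Hx0].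
    exists x0. intros x Hx. change (Rabs (Fsup g x - 1) < eps).
    assert (1 - eps/2 <= g x0) by (apply (g_ge V nu Hd A a Ha); auto).
    assert (g x0 <= Fsup g x) by (apply F_ge; auto).
    destruct HFd as [Hb _]. specialize (Hb x).
    apply Rabs_def1; destruct eps; simpl in *; lra.
Qed.
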